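(* Let $k\in\mathbb C$ be non-algebraic and $n,m\in\mathbb Z_{>0}$. Let $E$ be an $\mathcal E$-equivalence class (with respect to $p_0=n+k^{-1}m$), with minimal element $(\lambda_m,\mu_m)$ and maximal element $(\lambda_M,\mu_M)$, and let $\nu_1,\dots,\nu_r$ be the connected components of $\lambda_M\setminus\lambda_m$. For a set of boxes $\nu$ put $g_s(\nu)=\sum_{x\in\nu}c(x,0)^{s-1}$. Then the determinant $\det\big(g_s(\nu_t)\big)_{s,t=1}^{r}$ is nonzero.
   Context: Partitions are Young diagrams (finite sets of boxes $(i,j)\in\mathbb Z^2_{>0}$, $i$ = row, $j$ = column, closed under moving up or left); a bipartition is a pair of partitions; inclusion componentwise; connected components are with respect to boxes sharing an edge. For a box $x=(i,j)$, $c(x,a)=(j-1)+k(i-1)+a$; for $\alpha=(\lambda,\mu)$, $b_r(\alpha,k,p_0)=\sum_{x\in\lambda}c(x,0)^{r-1}+(-1)^r\sum_{y\in\mu}c(y,1+k-kp_0)^{r-1}$; bipartitions are $\mathcal E$-equivalent if all $b_r(\cdot,k,n+k^{-1}m)$, $r\ge1$, coincide. Each $\mathcal E$-class has a unique minimal and maximal element with respect to inclusion. *)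

(* Defs.v *)
From mathcomp Require Import all_boot all_algebra finmap complex.
From mathcomp Require Import Rstruct.
Import GRing.Theory Num.Theory.
Set Implicit Arguments. Unset Strict Implicit. Unset Printing Implicit Defensive.
Local Open Scope ring_scope.
Local Open Scope fset_scope.

Definition CC : fieldType := (Rdefinitions.R)[i].

Definition non_algebraic (k : CC) : Prop :=
  forall p : {poly rat}, p != 0 -> ~~ root (map_poly ratr p) k.

(* A box (i,j): i = row, j = column, both >= 1. *)
Definition box := (nat * nat)%type.

Definition is_partition (l : {fset box}) : Prop :=
  forall x, x \in l ->
    [/\ (0 < x.1)%N, (0 < x.2)%N,
        ((1 < x.1)%N -> (x.1.-1, x.2) \in l) &
        ((1 < x.2)%N -> (x.1, x.2.-1) \in l)].

Definition bipartition := ({fset box} * {fset box})%type.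

Definition is_bipartition (a : bipartition) : Prop :=
  is_partition a.1 /\ is_partition a.2.

Definition bip_sub (a b : bipartition) : Prop :=
  (a.1 `<=` b.1) /\ (a.2 `<=` b.2).

Definition cont (k : CC) (x : box) (a : CC) : CC :=
  (x.2.-1)%:R + k * (x.1.-1)%:R + a.

Definition bfun (r : nat) (al : bipartition) (k p0 : CC) : CC :=
  \sum_(x <- al.1) cont k x 0 ^+ r.-1
  + (-1) ^+ r * \sum_(y <- al.2) cont k y (1 + k - k * p0) ^+ r.-1.

Definition Eequiv (k : CC) (n m : nat) (a b : bipartition) : Prop :=
  forall r : nat, (0 < r)%N ->
    bfun r a k (n%:R + k^-1 * m%:R) = bfun r b k (n%:R + k^-1 * m%:R).

Definition adjb (x y : box) : bool :=
  ((x.1 == y.1) && ((x.2 == y.2.+1) || (y.2 == x.2.+1))) ||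
  ((x.2 == y.2) && ((x.1 == y.1.+1) || (y.1 == x.1.+1))).

Definition is_component (D Cc : {fset box}) : Prop :=
  exists2 x, x \in Cc &
    forall y, y \in Cc <->
      (y \in D /\ exists p : seq box,
          [/\ path adjb x p, last x p = y & all (fun z => z \in D) (x :: p)]).

Definition components_list (D : {fset box}) (s : seq {fset box}) : Prop :=
  uniq s /\ forall Cc, Cc \in s <-> is_component D Cc.

Definition gfun (k : CC) (s : nat) (nu : {fset box}) : CC :=
  \sum_(x <- nu) cont k x 0 ^+ s.-1.

(* Main.v *)
Require Import Defs.
From mathcomp Require Import all_boot all_algebra finmap complex.
From mathcomp Require Import Rstruct.
Import GRing.Theory Num.Theory.
Local Open Scope ring_scope.
Local Open Scope fset_scope.
From mathcomp Require Import zify.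
Set Implicit Arguments. Unset Strict Implicit. Unset Printing Implicit Defensive.
Section Pos.
Local Open Scope ring_scope.
Variable R : realFieldType.
Variable T : eqType.
Variable r : nat.
Variable v : T -> R.

Definition Mof (L : 'I_r -> seq T) : 'M[R]_r :=
  \matrix_(s < r, t < r) \sum_(z <- L t) v z ^+ s.

Lemma det_split (L : 'I_r -> seq T) t x l :
  L t = x :: l ->
  \det (Mof L) = \det (Mof (fun t' => if t' == t then [:: x] else L t'))
               + \det (Mof (fun t' => if t' == t then l else L t')).
Proof.
move=> Lt.
rewrite (expand_det_col _ t) (expand_det_col (Mof _) t) (expand_det_col (Mof (fun t' => if t' == t then l else _)) t).
rewrite -big_split /=; apply: eq_bigr => i _.
have Hc : forall L1 L2 : 'I_r -> seq T, (forall t', t' != t -> L1 t' = L2 t') ->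
   cofactor (Mof L1) i t = cofactor (Mof L2) i t.
  move=> L1 L2 HL; rewrite /cofactor.
  congr (_ * _); congr (\det _); apply/matrixP => a b; rewrite !mxE HL //.
  by rewrite eq_sym neq_lift.
rewrite (Hc (fun t' => if t' == t then [:: x] else L t') L); last by move=> t' /negPf ->.
rewrite (Hc (fun t' => if t' == t then l else L t') L); last by move=> t' /negPf ->.
rewrite -mulrDl !mxE eqxx Lt big_cons big_seq1 //.
Qed.




Variable S : 'I_r -> seq T.
Variable sg : 'I_r -> 'I_r -> R.
Hypothesis Hsg : forall i j : 'I_r, (i < j)%N -> forall x y, x \in S i -> y \in S j ->
  0 < sg i j * (v y - v x).

Definition eps := \prod_(i < r) \prod_(j < r | (i < j)%N) sg i j.

Lemma single_ex (l : seq T) : size l == 1%N -> exists z, l = [:: z].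
Proof. by case: l => [|z [|]] //= _; exists z. Qed.

Lemma pos_base (L : 'I_r -> seq T) :
  (forall t, size (L t) == 1%N) -> (forall t, {subset L t <= S t}) ->
  0 < eps * \det (Mof L).
Proof.
move=> H1 Hsub.
have -> : Mof L = Vandermonde r (\row_t \sum_(z <- L t) v z).
  apply/matrixP => s t; rewrite !mxE.
  by have [z ->] := single_ex (H1 t); rewrite !big_seq1.
rewrite det_Vandermonde /eps -big_split /=; apply: prodr_gt0 => i _.
rewrite -big_split /=; apply: prodr_gt0 => j ij; rewrite !mxE.
have [zi Ei] := single_ex (H1 i); have [zj Ej] := single_ex (H1 j).
rewrite Ei Ej !big_seq1; apply: Hsg => //.
  by apply: Hsub; rewrite Ei mem_seq1.
by apply: Hsub; rewrite Ej mem_seq1.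
Qed.

Lemma pos_gen N (L : 'I_r -> seq T) :
  (\sum_t size (L t) <= N)%N ->
  (forall t, L t != [::]) -> (forall t, {subset L t <= S t}) ->
  0 < eps * \det (Mof L).
Proof.
elim: N L => [|N IH] L HN Hne Hsub.
  case: (boolP [forall t, size (L t) == 1%N]) => [/forallP H1|]; first exact: pos_base.
  move=> /forallPn [t _].
  move: HN; rewrite (bigD1 t) //=; case: (L t) (Hne t) => //.
case: (boolP [forall t, size (L t) == 1%N]) => [/forallP H1|]; first exact: pos_base.
move=> /forallPn [t Ht].
have [x [y [l Lt]]] : exists x y l, L t = x :: y :: l.
  by move: Ht (Hne t); case: (L t) => [|x [|y l]] //; exists x, y, l.
have Hlt : forall l', (size l' < size (L t))%N ->
    (\sum_t' size (if t' == t then l' else L t') <= N)%N.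
  move=> l' Hl'; rewrite (bigD1 t) //= eqxx; move: HN; rewrite (bigD1 t) //=.
  set A := (\sum_(i | _) _)%N; set B := (\sum_(i | _) _)%N.
  have -> : A = B by apply: eq_bigr => i /negPf ->.
  move=> HN; rewrite -ltnS; apply: leq_trans HN; by rewrite ltn_add2r.
rewrite (det_split Lt) mulrDr; apply: addr_gt0; apply: IH.
- by apply: Hlt; rewrite Lt.
- by move=> t'; case: ifP.
- move=> t'; case: ifP => [/eqP -> z|_]; last exact: Hsub.
  by rewrite mem_seq1 => /eqP ->; apply: Hsub; rewrite Lt mem_head.
- by apply: Hlt; rewrite Lt.
- by move=> t'; case: ifP.
- move=> t'; case: ifP => [/eqP -> z|_]; last exact: Hsub.
  by move=> zl; apply: Hsub; rewrite Lt inE zl orbT.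
Qed.
End Pos.

Local Open Scope nat_scope.
Local Open Scope fset_scope.
Lemma adjb_sym x y : adjb x y = adjb y x.
Proof. rewrite /adjb; apply/idP/idP; lia. Qed.
Lemma adjb_le x y : adjb x y -> (x.2 <= y.2.+1) && (y.2 <= x.2.+1).
Proof. rewrite /adjb; lia. Qed.

Definition conn (D : {fset box}) x y := exists p : seq box,
  [/\ path adjb x p, last x p = y & all (fun z => z \in D) (x :: p)].

Section Conn.
Variable D : {fset box}.

Lemma conn_refl x : x \in D -> conn D x x.
Proof. by move=> xD; exists [::]; rewrite /= xD. Qed.

Lemma conn_mem x y : conn D x y -> (x \in D) && (y \in D).
Proof.
case=> p [_ <- Ha]; move: (Ha) => /= /andP [-> _] /=.
by move/allP: Ha; apply; apply: mem_last.
Qed.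

Lemma conn_trans x y z : conn D x y -> conn D y z -> conn D x z.
Proof.
case=> p [Pp Lp Ap] [q [Pq Lq Aq]]; exists (p ++ q); split.
- by rewrite cat_path Pp Lp.
- by rewrite last_cat Lp.
- by rewrite -cat_cons all_cat Ap; move: Aq => /= /andP [].
Qed.

Lemma conn_step x y : x \in D -> y \in D -> adjb x y -> conn D x y.
Proof. by move=> xD yD a; exists [:: y]; rewrite /= xD yD a. Qed.

Lemma conn_sym x y : conn D x y -> conn D y x.
Proof.
case=> p; elim: p x => [|z p IH] x [/= Pp Lp Ap].
  by rewrite -Lp; apply: conn_refl; move: Ap => /andP [].
move: Pp Ap => /= /andP [a Pp] /andP [xD Ap].
apply: (@conn_trans _ z); first by apply: IH.
by apply: conn_step => //; [move: Ap => /andP [] | rewrite adjb_sym].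
Qed.

Lemma path_conn x p : path adjb x p -> all (fun z => z \in D) (x :: p) ->
  forall z, z \in x :: p -> conn D x z.
Proof.
elim: p x => [|y p IH] x /=.
  by move=> _ /andP [xD _] z; rewrite mem_seq1 => /eqP ->; apply: conn_refl.
move=> /andP [a Pp] /andP [xD Ap] z; rewrite inE => /orP [/eqP ->|zp].
  exact: conn_refl.
apply: (@conn_trans _ y); first by apply: conn_step => //; move: Ap => /andP [].
by apply: IH => //; rewrite inE zp orbT.
Qed.

Lemma path_side c x p : path adjb x p -> all (fun z => z.2 != c) (x :: p) ->
  (x.2 < c) = ((last x p).2 < c).
Proof.
elim: p x => [|y p IH] x //= /andP [a Pp] /andP [xc Ap].
rewrite -IH //; move: (adjb_le a) xc (Ap) => /= H xc /andP [yc _].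
apply/idP/idP; lia.
Qed.

Lemma comp_conn C y z : is_component D C -> y \in C -> z \in C -> conn D y z.
Proof.
case=> x0 _ HC /HC [_ [p [P L A]]] /HC [_ [q [P' L' A']]].
apply: (@conn_trans _ x0); last by exists q.
by apply: conn_sym; exists p.
Qed.

Lemma comp_closed C y z : is_component D C -> y \in C -> conn D y z -> z \in C.
Proof.
move=> HC0; case: (HC0) => x0 x0C HC yC Hyz.
have := comp_conn HC0 x0C yC => Hx0y.
have [p [P L A]] := conn_trans Hx0y Hyz.
apply/HC; split; last by exists p.
by case/andP: (conn_mem Hyz).
Qed.

Lemma comp_eq C1 C2 y : is_component D C1 -> is_component D C2 ->
  y \in C1 -> y \in C2 -> C1 = C2.
Proof.
move=> H1 H2 y1 y2; apply/fsetP => z; apply/idP/idP => zC.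
  by apply: (comp_closed H2 y2); apply: (comp_conn H1).
by apply: (comp_closed H1 y1); apply: (comp_conn H2).
Qed.

Lemma comp_side C x x' c : is_component D C -> x \in C -> x' \in C ->
  (forall z, z \in C -> z.2 != c) -> (x.2 < c) = (x'.2 < c).
Proof.
move=> HC xC x'C Hc; have [p [P L A]] := comp_conn HC xC x'C.
rewrite -L; apply: path_side => //; apply/allP => z zp.
by apply: Hc; apply: (comp_closed HC xC); apply: path_conn zp.
Qed.
End Conn.

Lemma part_down0 l a b c e : is_partition l -> (a, b) \in l -> (0 < c)%N -> (0 < e)%N ->
  (c <= a)%N -> (e <= b)%N -> (c, e) \in l.
Proof.
move=> Hl; move: {2}((a - c) + (b - e))%N (erefl ((a - c) + (b - e))%N) => d.
elim: d a b => [|d IH] a b Hd yl z1 z2 zy1 zy2.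
  by have [-> ->] : c = a /\ e = b by lia.
have [/= y1 y2 Hy1 Hy2] := Hl _ yl.
case: (ltnP c a) => H.
  by apply: (IH a.-1 b); try lia; apply: Hy1; lia.
by apply: (IH a b.-1); try lia; apply: Hy2; lia.
Qed.

Lemma part_down l y z : is_partition l -> y \in l -> (0 < z.1)%N -> (0 < z.2)%N ->
  (z.1 <= y.1)%N -> (z.2 <= y.2)%N -> z \in l.
Proof. by case: y z => a b [c e]; apply: part_down0. Qed.

Section Rect.
Variables lM lm : {fset box}.
Hypothesis HM : is_partition lM.
Hypothesis Hm : is_partition lm.
Local Notation D := (lM `\` lm).

Lemma inD x y z : x \in D -> y \in D -> (x.1 <= z.1)%N -> (x.2 <= z.2)%N ->
  (z.1 <= y.1)%N -> (z.2 <= y.2)%N -> z \in D.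
Proof.
rewrite !in_fsetD => /andP [xm xM] /andP [ym yM] h1 h2 h3 h4.
have [x1 x2 _ _] := HM xM.
rewrite (part_down HM yM) ?andbT //; try lia.
apply/negP => zm; move/negP: xm; apply.
by apply: (part_down Hm zm).
Qed.

Lemma rect_conn0 a b c e : (a, b) \in D -> (c, e) \in D -> (a <= c)%N -> (b <= e)%N ->
  conn D (a, b) (c, e).
Proof.
move: {2}((c - a) + (e - b))%N (erefl ((c - a) + (e - b))%N) => d.
elim: d a b => [|d IH] a b Hd xD yD h1 h2.
  have [-> ->] : a = c /\ b = e by lia.
  by apply: conn_refl.
case: (ltnP a c) => H.
  apply: (@conn_trans _ _ (a.+1, b)); last by apply: IH => //; try lia;
    apply: (inD xD yD) => /=; lia.
  apply: conn_step => //; first by apply: (inD xD yD) => /=; lia.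
  by rewrite /adjb /=; lia.
apply: (@conn_trans _ _ (a, b.+1)); last by apply: IH => //; try lia;
  apply: (inD xD yD) => /=; lia.
apply: conn_step => //; first by apply: (inD xD yD) => /=; lia.
by rewrite /adjb /=; lia.
Qed.

Lemma rect_conn x y : x \in D -> y \in D -> (x.1 <= y.1)%N -> (x.2 <= y.2)%N ->
  conn D x y.
Proof. by case: x y => a b [c e]; apply: rect_conn0. Qed.
End Rect.

Lemma comp_inD D C x : is_component D C -> x \in C -> x \in D.
Proof. by case=> x0 _ HC /HC []. Qed.

Section Sep.
Variables lM lm : {fset box}.
Hypothesis HM : is_partition lM.
Hypothesis Hm : is_partition lm.
Variable nu : seq {fset box}.
Hypothesis Hnu : components_list (lM `\` lm) nu.

Lemma nu_comp i : (i < size nu)%N -> is_component (lM `\` lm) (nth fset0 nu i).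
Proof. by move=> H; apply/(proj2 Hnu); apply: mem_nth. Qed.

Lemma sep i j x y : (i < size nu)%N -> (j < size nu)%N -> i != j ->
  x \in nth fset0 nu i -> y \in nth fset0 nu j -> ~~ ((x.1 <= y.1) && (x.2 <= y.2))%N.
Proof.
move=> Hi Hj ij xi yj; apply/negP => /andP [h1 h2].
have Ci := nu_comp Hi; have Cj := nu_comp Hj.
have Hc := rect_conn HM Hm (comp_inD Ci xi) (comp_inD Cj yj) h1 h2.
have yi := comp_closed Ci xi Hc.
have E := comp_eq Ci Cj yi yj.
by move/eqP: ij; apply; apply/eqP; rewrite -(nth_uniq fset0 Hi Hj (proj1 Hnu)) E.
Qed.

Lemma col_neq i j x y : (i < size nu)%N -> (j < size nu)%N -> i != j ->
  x \in nth fset0 nu i -> y \in nth fset0 nu j -> x.2 != y.2.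
Proof.
move=> Hi Hj ij xi yj.
have := sep Hi Hj ij xi yj; rewrite eq_sym in ij.
have := sep Hj Hi ij yj xi; case: x y {xi yj} => a b [c e] /=; lia.
Qed.

Lemma side i j x x' y : (i < size nu)%N -> (j < size nu)%N -> i != j ->
  x \in nth fset0 nu i -> x' \in nth fset0 nu i -> y \in nth fset0 nu j ->
  (x.2 < y.2)%N = (x'.2 < y.2)%N.
Proof.
move=> Hi Hj ij xi x'i yj; apply: (comp_side (nu_comp Hi)) => // z zi.
exact: (col_neq Hi Hj ij zi yj).
Qed.
End Sep.

Lemma aux1 (a b c d : nat) : (a<b) = (c<b) -> (b<c) = (d<c) -> a!=b -> c!=b -> c!=d -> (c<d) = true -> 0<a -> 0<b -> a.-1 < b.-1.
Proof. lia. Qed.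
Lemma aux2 (a b c d : nat) : (a<b) = (c<b) -> (b<c) = (d<c) -> a!=b -> c!=b -> c!=d -> (c<d) = false -> 0<a -> 0<b -> b.-1 < a.-1.
Proof. lia. Qed.

Unset Implicit Arguments.
Local Open Scope ring_scope.
Local Open Scope fset_scope.

Theorem mainTheorem12 (k : CC) (n m : nat) (amin aMax : bipartition)
  (nu : seq {fset box}) :
  non_algebraic k -> (0 < n)%N -> (0 < m)%N ->
  is_bipartition amin -> is_bipartition aMax ->
  Eequiv k n m aMax amin ->
  (forall b : bipartition, is_bipartition b -> Eequiv k n m b amin ->
     bip_sub amin b /\ bip_sub b aMax) ->
  components_list (aMax.1 `\` amin.1) nu ->
  \det (\matrix_(s < size nu, t < size nu) gfun k s.+1 (nth fset0 nu t)) != 0.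
Proof.
move=> Hk _ _ [Hm _] [HM _] _ _ Hnu.
set r := size nu.
pose S (t : 'I_r) : seq box := nth fset0 nu t.
pose Mp : 'M[{poly rat}]_r := \matrix_(s < r, t < r)
   (\sum_(x <- S t) ((x.2.-1)%:R + 'X * (x.1.-1)%:R) ^+ s)%R.
have -> : \matrix_(s < r, t < r) gfun k s.+1 (nth fset0 nu t) =
   map_mx (horner_eval k) (map_mx (map_poly ratr) Mp).
  apply/matrixP => s t; rewrite !mxE /gfun /= !rmorph_sum /=; apply: eq_bigr => x _.
  by rewrite !rmorphXn /= !rmorphD !rmorphM /= map_polyX !rmorph_nat !horner_evalE !hornerE /cont addr0.
rewrite (det_map_mx (horner_eval k)) (det_map_mx (map_poly ratr)).
suff Hdet : \det Mp != 0 by move: (Hk _ Hdet); rewrite /root.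
pose v (x : box) : rat := (x.2.-1)%:R.
have Hne : forall t : 'I_r, S t != [::].
  move=> t; have [x0 x0C _] := nu_comp Hnu (ltn_ord t).
  by apply/eqP => E; move: x0C; rewrite -[x0 \in _]/(x0 \in S t) E.
pose rho (t : 'I_r) := nth (0, 0)%N (S t) 0.
have rhoS : forall t, rho t \in S t.
  by move=> t; apply: mem_nth; rewrite lt0n size_eq0.
pose sg (i j : 'I_r) : rat := if ((rho i).2 < (rho j).2)%N then 1 else -1.
have Hsg : forall i j : 'I_r, (i < j)%N -> forall x y, x \in S i -> y \in S j ->
    (0 < sg i j * (v y - v x))%R.
  move=> i j ij x y xi yj.
  have ij' : (i : nat) != j by rewrite neq_ltn ij.
  have ji' : (j : nat) != i by rewrite neq_ltn ij orbT.
  have h1 := side HM Hm Hnu (ltn_ord i) (ltn_ord j) ij' xi (rhoS i) yj.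
  have h2 := side HM Hm Hnu (ltn_ord j) (ltn_ord i) ji' yj (rhoS j) (rhoS i).
  have n1 := col_neq HM Hm Hnu (ltn_ord i) (ltn_ord j) ij' xi yj.
  have n2 := col_neq HM Hm Hnu (ltn_ord i) (ltn_ord j) ij' (rhoS i) yj.
  have n3 := col_neq HM Hm Hnu (ltn_ord i) (ltn_ord j) ij' (rhoS i) (rhoS j).
  have xM : x \in aMax.1.
    by move: (comp_inD (nu_comp Hnu (ltn_ord i)) xi); rewrite in_fsetD => /andP [].
  have yM : y \in aMax.1.
    by move: (comp_inD (nu_comp Hnu (ltn_ord j)) yj); rewrite in_fsetD => /andP [].
  have [_ x2 _ _] := HM x xM.
  have [_ y2 _ _] := HM y yM.
  rewrite /sg /v; case: ifP => H.
    rewrite mul1r subr_gt0 ltr_nat.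
    exact: (aux1 h1 h2 n1 n2 n3 H x2 y2).
  rewrite mulN1r oppr_gt0 subr_lt0 ltr_nat.
  exact: (aux2 h1 h2 n1 n2 n3 H x2 y2).
have Hpos := pos_gen Hsg (leqnn _) Hne (fun t => @sub_refl _ _).
have E : (\det Mp).[0] = \det (Mof v S).
  rewrite -horner_evalE -det_map_mx; congr (\det _).
  apply/matrixP => s t; rewrite !mxE rmorph_sum; apply: eq_bigr => x _.
  by rewrite rmorphXn /= horner_evalE !hornerE hornerMn hornerC.
by apply/eqP => E0; move: Hpos; rewrite -E E0 horner0 mulr0 lt0r eqxx.
Qed.
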